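(* Let $\Sigma=\mathbb R$. There exists a class $\mathcal F\subseteq\mathbb R^{\mathbb R^*}$ of generators $f:\mathbb R^*\to\mathbb R$ such that $\mathrm{Pdim}(\mathcal F)=1$ but $\mathrm{Pdim}(\mathcal F^{\mathrm{e2e}(T)})=\infty$, already for $T=2$.
   Context: $\mathbb R^*$ is the set of finite sequences of reals. For $f:\mathbb R^*\to\mathbb R$, $\bar f(\mathbf x)$ is $\mathbf x$ with $f(\mathbf x)$ appended; $f^{\mathrm{CoT}(T)}=\bar f^{\circ T}$; $f^{\mathrm{e2e}(T)}(\mathbf x)$ is the last entry of $f^{\mathrm{CoT}(T)}(\mathbf x)$; $\mathcal F^{\mathrm{e2e}(T)}=\{f^{\mathrm{e2e}(T)}:f\in\mathcal F\}$. Pseudo-dimension $\mathrm{Pdim}(\mathcal H)$ of a real-valued class on a domain $\mathcal X$: the largest $D$ such that there exist $\mathbf x_1,\dots,\mathbf x_D\in\mathcal X$ and thresholds $\theta_1,\dots,\theta_D\in\mathbb R$ with $|\{(\mathrm{sign}(h(\mathbf x_1)-\theta_1),\dots,\mathrm{sign}(h(\mathbf x_D)-\theta_D)):h\in\mathcal H\}|=2^D$; it is $\infty$ if no largest such $D$ exists. *)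

(* Defs.v *)
From HB Require Import structures.
From mathcomp Require Import all_boot all_order all_algebra.
From mathcomp Require Import boolp classical_sets reals.
Set Implicit Arguments. Unset Strict Implicit. Unset Printing Implicit Defensive.
Import Order.TTheory GRing.Theory Num.Theory.
Local Open Scope ring_scope.

Section Defs.
Variable R : realType.

(* R^* is represented by seq R (finite sequences of reals). *)

Definition bar (f : seq R -> R) (x : seq R) : seq R := rcons x (f x).

Definition CoT (f : seq R -> R) (T : nat) : seq R -> seq R := iter T (bar f).

(* f^{e2e(T)} (x) = last entry of f^{CoT(T)}(x)
   (for T >= 1 the sequence is nonempty, so the default 0 is never used) *)
Definition e2e (f : seq R -> R) (T : nat) (x : seq R) : R := last 0 (CoT f T x).

Definition e2e_class (F : set (seq R -> R)) (T : nat) : set (seq R -> R) :=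
  [set g | exists2 f, F f & g = e2e f T].

End Defs.

Section Pdim.
Variables (R : realType) (X : Type).

(* The set of sign patterns (sign(h(x_1)-th_1), ..., sign(h(x_D)-th_D)), h in H,
   with sign encoded as the boolean  th_i <= h(x_i)  (sign(0) = +1). *)
Definition patterns (H : set (X -> R)) (D : nat) (xs : 'I_D -> X) (th : 'I_D -> R)
  : {set {ffun 'I_D -> bool}} :=
  [set b : {ffun 'I_D -> bool} |
     `[< exists2 h, H h & forall i : 'I_D, b i = (th i <= h (xs i)) >] ].

Definition pshatters_size (H : set (X -> R)) (D : nat) : Prop :=
  exists (xs : 'I_D -> X) (th : 'I_D -> R), #|patterns H xs th| = (2 ^ D)%N.

Definition Pdim_eq (H : set (X -> R)) (n : nat) : Prop :=
  pshatters_size H n /\ forall D, pshatters_size H D -> (D <= n)%N.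

Definition Pdim_infinite (H : set (X -> R)) : Prop :=
  ~ exists n, Pdim_eq H n.

End Pdim.

(* Main.v *)
Require Import Defs.
From mathcomp Require Import all_boot all_order all_algebra.
From mathcomp Require Import boolp classical_sets reals.
Import Order.TTheory GRing.Theory Num.Theory.
Local Open Scope ring_scope.

Fixpoint code (s : seq bool) : nat := if s is x :: s' then (x + 2 * code s')%N else 0%N.

Lemma code_bit s i : odd (code s %/ 2 ^ i) = nth false s i.
Proof.
elim: s i => [|x s IH] [|i] /=; rewrite ?div0n //.
  by rewrite expn0 divn1 oddD oddM /= addbF oddb.
rewrite expnS divnMA -IH; congr (odd (_ %/ _)).
rewrite addnC mulnC divnMDl // divn_small ?addn0 //; by case: x.
Qed.

Section C.
Variable R : realType.

Definition H (u v : R) : R :=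
  if `[< exists (j m : nat), u = j%:R /\ v = m%:R /\ odd (m %/ 2 ^ j) >] then 1 else 0.

Definition fa (a : R) (x : seq R) : R :=
  match x with [:: _] => a | [:: u; v] => H u v | _ => 0 end.

Definition FF : set (seq R -> R) := [set g | exists a, g = fa a].

Lemma fa_mono a b x : a <= b -> fa a x <= fa b x.
Proof. by move=> ab; case: x => [|u [|v [|w s]]] /=. Qed.

Lemma e2e_fa a u : e2e (fa a) 2 [:: u] = H u a.
Proof. by []. Qed.

Lemma full_of_card D (A : {set {ffun 'I_D -> bool}}) :
  #|A| = (2 ^ D)%N -> A = finset.setTfor {ffun 'I_D -> bool}.
Proof.
move=> cA; apply/eqP; rewrite eqEcard finset.subsetT cardsT card_ffun card_bool card_ord cA.
by rewrite leqnn.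
Qed.

Lemma card_full D : #|finset.setTfor {ffun 'I_D -> bool}| = (2 ^ D)%N.
Proof. by rewrite cardsT card_ffun card_bool card_ord. Qed.

Lemma all_card D (A : {set {ffun 'I_D -> bool}}) :
  (forall b, b \in A) -> #|A| = (2 ^ D)%N.
Proof.
move=> hA; rewrite -(card_full D); apply: eq_card => b.
by rewrite hA finset.in_setT.
Qed.

End C.
Arguments fa {R}.
Arguments FF {R}.
Arguments H {R}.
Arguments e2e_fa {R}.
Arguments fa_mono {R} a b x.

Theorem theoremE6 (R : realType) :
  exists F : set (seq R -> R),
    Pdim_eq F 1 /\ Pdim_infinite (e2e_class F 2).
Proof.
exists (@FF R); split; [split|].
- exists (fun _ => [:: 0]), (fun _ => 0).
  apply: all_card => b; rewrite inE.
  apply/asboolP; exists (fa (if b ord0 then 1 else -1)); first by exists (if b ord0 then 1 else -1).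
  move=> i; rewrite (ord1 i) /=; by case: (b ord0); rewrite ?ler01 ?ler0N1.
- move=> D [xs [th cP]]; rewrite leqNgt; apply/negP => D2.
  have hA := full_of_card _ _ cP.
  pose i0 : 'I_D := @Ordinal D 0 (ltn_trans (ltn0Sn 0) D2).
  pose i1 : 'I_D := @Ordinal D 1 D2.
  have P1 : [ffun i => i == i0] \in patterns FF xs th by rewrite hA inE.
  have P2 : [ffun i => i == i1] \in patterns FF xs th by rewrite hA inE.
  move: P1 P2; rewrite !inE => -[h1 [a1 ->] e1] [h2 [a2 ->] e2].
  have := e1 i0; have := e1 i1; have := e2 i0; have := e2 i1; rewrite !ffunE !eqxx.
  have -> : (i1 == i0) = false by [].
  have -> : (i0 == i1) = false by [].
  move=> /esym t2 /esym/negbT f2 /esym/negbT f1 /esym t1.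
  rewrite -!ltNge in f1 f2.
  case: (lerP a1 a2) => a12.
  + have := fa_mono _ _ (xs i0) a12; have := lt_le_trans f2 t1; by rewrite leNgt => ->.
  + have := fa_mono _ _ (xs i1) (ltW a12); have := lt_le_trans f1 t2; by rewrite leNgt => ->.
- move=> [n [_ hn]]; have := hn n.+1; rewrite ltnn => h; suff hs : pshatters_size (e2e_class (@FF R) 2) n.+1 by have := h hs.  exists (fun i : 'I_n.+1 => [:: (i : nat)%:R]), (fun _ => 1).
  apply: all_card => b; rewrite inE.
  pose s := [seq b i | i <- enum 'I_n.+1].
  apply/asboolP; exists (e2e (fa (code s)%:R) 2); first by exists (fa (code s)%:R); [exists (code s)%:R|].
  move=> i; rewrite e2e_fa /H.
  have bi : b i = nth false s i.
    by rewrite /s (nth_map i) ?size_enum_ord // nth_ord_enum.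
  case: asboolP => [[j [m [ej [em od]]]]|ne].
    move/eqP: ej; rewrite eqr_nat => /eqP ej; move/eqP: em; rewrite eqr_nat => /eqP em; subst.
    by rewrite lexx bi -code_bit.
  rewrite ler10; apply/negP => bt; apply: ne; exists i, (code s); split => //; split => //.
  by rewrite code_bit -bi.
Qed.
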